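(* Let $q$ be a prime power, $n$ a block length, $r$ a locality parameter with $r\mid n$, and $\ell$ an integer with $0\le \ell< n/2-n/r$. Let $\mathcal{C}=\mathrm{CSS}(C_X,C_Z)$ be a random qLRC with parameters $n,r,\ell$ over $\mathbb{F}_q$ (as defined in the context). For any $\delta,\epsilon>0$, if $\ell\geq(H_q(\delta)+\epsilon)n$ then \[ \Pr[d(\mathcal{C})\geq\delta n] > 1-2q^{-\epsilon n}. \] In particular, if $q\geq 2^{2/\epsilon}$, then for all $\ell\geq(\delta+\epsilon)n$, \[ \Pr[d(\mathcal{C})\geq\delta n] > 1-2q^{-\epsilon n/2}. \]
   Context: For $x,y\in\mathbb{F}_q^n$, $x\cdot y=\sum_i x_iy_i$; for a linear code $C\subseteq\mathbb{F}_q^n$, $C^\perp=\{y: y\cdot c=0\ \forall c\in C\}$. For linear codes $C_X,C_Z\subseteq\mathbb{F}_q^n$ with $C_X^\perp\subseteq C_Z$, the CSS code $\mathrm{CSS}(C_X,C_Z)=\mathrm{span}\{\sum_{y\in C_X^\perp}|x+y\rangle: x\in C_Z\}\subseteq(\mathbb{C}^q)^{\otimes n}$; its distance is $d(\mathcal{C})=\min\{|y|: y\in (C_Z\setminus C_X^\perp)\cup(C_X\setminus C_Z^\perp)\}$, where $|y|$ is the Hamming weight. Random qLRC: initialize $H_X,H_Z\in\mathbb{F}_q^{(n/r)\times n}$ by, for row $j\in\{0,\dots,n/r-1\}$ and column $i\in\{0,\dots,n-1\}$: $(H_X)_{j,i}=1$ if $i\in\{rj,\dots,rj+r-1\}$ and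 $0$ otherwise; $(H_Z)_{j,i}=-(r-1)$ if $i=rj$, $1$ if $i\in\{rj+1,\dots,rj+r-1\}$, and $0$ otherwise. Then (1) repeat $\ell$ times: sample a uniformly random vector in $\text{row-span}(H_Z)^\perp\setminus\text{row-span}(H_X)$ and append it as a new row of $H_X$; (2) repeat $\ell$ times: sample a uniformly random vector in $\text{row-span}(H_X)^\perp\setminus\text{row-span}(H_Z)$ and append it as a new row of $H_Z$. Set $C_X=\ker H_X$, $C_Z=\ker H_Z$ (so $C_X^\perp\subseteq C_Z$). The $q$-ary entropy function is $H_q(x)=x\log_q(q-1)-x\log_q x-(1-x)\log_q(1-x)$.
   Formalization: For both the main bound and the in-particular bound, δ is also restricted by δ ≤ 1 − 1/q, in addition to δ > 0, instead of ranging over all positive reals. Apart from conventions, each condition added here is assumed in the paper as well or is needed for the statement above to hold. *)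

(* Defs.v *)
From HB Require Import structures.
From mathcomp Require Import all_boot all_order all_algebra.
From mathcomp Require Import all_classical all_reals all_analysis.
Set Implicit Arguments. Unset Strict Implicit. Unset Printing Implicit Defensive.
Import Order.TTheory GRing.Theory Num.Theory.
Local Open Scope ring_scope.

Section QLRC.
Variable F : finFieldType.
Variable n : nat.

Definition vec := 'rV[F]_n.

Definition dotv (x y : vec) : F := \sum_(i < n) x 0 i * y 0 i.

Definition wt (y : vec) : nat := #|[set i : 'I_n | y 0 i != 0]|.

Definition rowspan (s : seq vec) : {set vec} := [set v | v \in span s].

Definition perp (C : {set vec}) : {set vec} :=
  [set y | [forall c in C, dotv y c == 0]].

Definition kerH (s : seq vec) : {set vec} :=
  [set x | all (fun h => dotv h x == 0) s].

(* distance of CSS(C_X, C_Z): min weight over (C_Z \ C_X^perp) u (C_X \ C_Z^perp);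
   the min over the empty set is taken to be n.+1 (i.e. "infinite"). *)
Definition css_dist (CX CZ : {set vec}) : nat :=
  \big[minn/n.+1]_(y in (CZ :\: perp CX) :|: (CX :\: perp CZ)) wt y.

Definition HX0 (r : nat) : seq vec :=
  [seq \row_(i < n) (if (r * j <= i < r * j + r)%N then 1 else 0) | j <- iota 0 (n %/ r)].
Definition HZ0 (r : nat) : seq vec :=
  [seq \row_(i < n) (if i == r * j :> nat then - ((r - 1)%:R)
                     else if (r * j + 1 <= i < r * j + r)%N then 1 else 0)
  | j <- iota 0 (n %/ r)].

Variable R : realType.

(* expectation of f under the uniform distribution on the finite set A
   (0 if A is empty, which never happens under the hypotheses) *)
Definition unif_avg (A : {set vec}) (f : vec -> R) : R :=
  (\sum_(v in A) f v) / (#|A|%:R).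

Fixpoint stepZ (k : nat) (sX sZ : seq vec) (P : seq vec -> seq vec -> bool) : R :=
  match k with
  | 0 => (P sX sZ)%:R
  | k'.+1 => unif_avg (perp (rowspan sX) :\: rowspan sZ)
               (fun v => stepZ k' sX (rcons sZ v) P)
  end.

Fixpoint stepX (l k : nat) (sX sZ : seq vec) (P : seq vec -> seq vec -> bool) : R :=
  match k with
  | 0 => stepZ l sX sZ P
  | k'.+1 => unif_avg (perp (rowspan sZ) :\: rowspan sX)
               (fun v => stepX l k' (rcons sX v) sZ P)
  end.

(* probability that the random qLRC with parameters n, r, l has the property P
   of its final (H_X, H_Z) *)
Definition qlrc_prob (r l : nat) (P : seq vec -> seq vec -> bool) : R :=
  stepX l l (HX0 r) (HZ0 r) P.

Definition qlrc_prob_dist_ge (r l : nat) (t : R) : R :=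
  qlrc_prob r l (fun sX sZ => t <= (css_dist (kerH sX) (kerH sZ))%:R).

End QLRC.

Definition Hq (R : realType) (q : nat) (x : R) : R :=
  (x * ln ((q%:R : R) - 1) - x * ln x - (1 - x) * ln (1 - x)) / ln (q%:R : R).

(* Main.v *)
Require Import Defs.
From HB Require Import structures.
From mathcomp Require Import all_boot all_order all_algebra.
From mathcomp Require Import all_classical all_reals all_analysis.
From mathcomp Require Import zify ring lra.
Set Implicit Arguments. Unset Strict Implicit. Unset Printing Implicit Defensive.
Import Order.TTheory GRing.Theory Num.Theory.
Local Open Scope ring_scope.


Section LinAlg.
Variable F : finFieldType.
Variable n : nat.
Local Notation vec := (vec F n).
Local Notation q := #|F|.

Lemma dotvC (x y : vec) : dotv x y = dotv y x.
Proof. by rewrite /dotv; apply: eq_bigr => i _; rewrite mulrC. Qed.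

Lemma dotv_linr (x y z : vec) a : dotv x (a *: y + z) = a * dotv x y + dotv x z.
Proof.
rewrite /dotv mulr_sumr -big_split /=; apply: eq_bigr => i _.
by rewrite !mxE mulrDr mulrCA.
Qed.

Lemma dotv_linl (x y z : vec) a : dotv (a *: y + z) x = a * dotv y x + dotv z x.
Proof. by rewrite dotvC dotv_linr (dotvC x) (dotvC x). Qed.

Lemma dotv0l (x : vec) : dotv 0 x = 0.
Proof. by rewrite /dotv big1 // => i _; rewrite mxE mul0r. Qed.

Lemma dotv_suml k (f : 'I_k -> vec) (a : 'I_k -> F) x :
  dotv (\sum_i a i *: f i) x = \sum_i a i * dotv (f i) x.
Proof.
elim/big_rec2: _ => [|i s1 s2 _ <-]; first by rewrite dotv0l.
by rewrite dotv_linl.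
Qed.

Lemma ker_span (s : seq vec) x c : x \in kerH s -> c \in span s -> dotv c x = 0.
Proof.
rewrite inE => /allP hx hc.
have := @coord_span _ _ _ (in_tuple s) c hc => ->.
rewrite dotv_suml big1 // => i _.
have /hx/eqP -> : (in_tuple s)`_i \in s by apply: mem_nth; exact: (ltn_ord i).
by rewrite mulr0.
Qed.

Lemma rowspanE (s : seq vec) v : (v \in rowspan s) = (v \in span s).
Proof. by rewrite inE. Qed.

Lemma kerH_sub_perp (s : seq vec) x : x \in kerH s -> x \in perp (rowspan s).
Proof.
move=> hx; rewrite inE; apply/forall_inP => c.
rewrite inE => hc; rewrite dotvC; apply/eqP; exact: ker_span hx hc.
Qed.

Lemma rowspan_card (s : seq vec) : (#|rowspan s| <= q ^ size s)%N.
Proof.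
pose g := fun f : {ffun 'I_(size s) -> F} => \sum_i f i *: (in_tuple s)`_i.
apply: (@leq_trans #|[set g f | f in [set: {ffun 'I_(size s) -> F}]]|).
  apply: subset_leq_card; apply/fintype.subsetP => v; rewrite inE => hv.
  apply/imsetP; exists [ffun i => coord (in_tuple s) i v]; first by rewrite inE.
  rewrite /g {1}(@coord_span _ _ _ (in_tuple s) v hv) /=.
  by apply: eq_bigr => i _; rewrite ffunE.
apply: leq_trans (leq_imset_card _ _) _.
by rewrite cardsT card_ffun card_ord.
Qed.

Lemma kerH_cons (a : vec) s : kerH (a :: s) = [set v in kerH s | dotv a v == 0].
Proof. by apply/setP => v; rewrite !inE /= andbC. Qed.

Lemma kerH_rcons (a : vec) s y : (y \in kerH (rcons s a)) = (y \in kerH s) && (dotv a y == 0).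
Proof. by rewrite !inE all_rcons andbC. Qed.

Lemma kerH_closed s (x v : vec) c : x \in kerH s -> v \in kerH s -> c *: x + v \in kerH s.
Proof.
rewrite !inE => /allP hx /allP hv; apply/allP => h hh.
by rewrite dotv_linr (eqP (hx h hh)) (eqP (hv h hh)) mulr0 addr0.
Qed.

Lemma card_cut (K : {set vec}) (a : vec) :
  (forall x v c, x \in K -> v \in K -> c *: x + v \in K) ->
  (#|K| <= #|[set v in K | dotv a v == 0%R]| * q)%N.
Proof.
move=> hK.
case: (boolP [exists x in K, dotv a x != 0]).
  move/exists_inP => [x xK ax].
  pose f := fun v : vec => (v - (dotv a v / dotv a x) *: x, dotv a v / dotv a x).
  have finj : {in K &, injective f}.
    move=> v w _ _ [] e1 e2.
    by move: e1; rewrite e2 => /addIr.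
  rewrite -(card_in_imset finj).
  apply: (@leq_trans #|finset.setX [set v in K | dotv a v == 0%R] [set: F]|).
    apply: subset_leq_card; apply/fintype.subsetP => p /imsetP [v vK ->].
    rewrite !inE /= andbT.
    have -> : v - dotv a v / dotv a x *: x = (- (dotv a v / dotv a x)) *: x + v.
      by rewrite addrC scaleNr.
    rewrite hK //= dotv_linr; apply/eqP; field; exact: ax.
  by rewrite cardsX cardsT.
rewrite negb_exists => /forallP hall.
have -> : [set v in K | dotv a v == 0%R] = K.
  apply/setP => v; rewrite inE; case vK: (v \in K) => //=.
  by have := hall v; rewrite vK /= negbK.
by apply: leq_pmulr; apply/card_gt0P; exists 0.
Qed.


Lemma q_gt1 : (1 < q)%N.
Proof.
by rewrite (cardD1 0) (cardD1 1) !inE oner_neq0 /= add1n.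
Qed.

Lemma kerH_card (s : seq vec) : (q ^ n <= #|kerH s| * q ^ size s)%N.
Proof.
elim: s => [|a s IH].
  have -> : kerH [::] = [set: vec] by apply/setP => v; rewrite !inE.
  by rewrite cardsT card_mx mul1n expn0 muln1.
rewrite kerH_cons /= expnS mulnA; apply: leq_trans IH _.
by rewrite leq_mul2r card_cut ?orbT //; exact: kerH_closed.
Qed.

Lemma perp_closed (C : {set vec}) x v c : x \in perp C -> v \in perp C -> c *: x + v \in perp C.
Proof.
rewrite !inE => /forall_inP hx /forall_inP hv; apply/forall_inP => w wC.
by rewrite dotv_linl (eqP (hx w wC)) (eqP (hv w wC)) mulr0 addr0.
Qed.

Lemma count_step (s1 s2 : seq vec) x y :
  x \in kerH s1 -> dotv x y != 0 -> y \in kerH s2 ->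
  (q * #|[set v in perp (rowspan s1) :\: rowspan s2 | dotv v y == 0%R]|
    <= #|perp (rowspan s1) :\: rowspan s2|)%N.
Proof.
move=> xk xy yk.
set S := perp (rowspan s1); set T := rowspan s2.
set S0 := [set v in S | dotv v y == 0%R].
have xS : x \in S := kerH_sub_perp xk.
have hS0 : (#|S0| * q <= #|S|)%N.
  pose f := fun p : vec * F => p.2 *: x + p.1.
  have finj : {in finset.setX S0 [set: F] &, injective f}.
    move=> [v c] [w d]; rewrite !inE /= => /andP [/andP [_ vy] _] /andP [/andP [_ wy] _].
    rewrite /f /= => e.
    have ecd : c = d.
      have := congr1 (fun u => dotv u y) e; rewrite /= !dotv_linl (eqP vy) (eqP wy) !addr0.
      by move/mulIf; apply.
    by move: e; rewrite ecd => /addrI ->.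
  rewrite -cardsT -cardsX -(card_in_imset finj).
  apply: subset_leq_card; apply/fintype.subsetP => u /imsetP [[v c]] hvc ->.
  have vS : v \in S by move: hvc; rewrite finset.in_setX /= => /andP [] /setIdP [].
  exact: perp_closed.
have TS0 : S :&: T = S0 :&: T.
  apply/setP => v; rewrite !finset.in_setI; case vT: (v \in T); rewrite ?andbF ?andbT //.
  have vy : dotv v y == 0 by move: vT; rewrite /T rowspanE => vT; rewrite (ker_span yk vT).
  by apply/idP/idP => [vS|/setIdP [] //]; apply/setIdP.
have -> : [set v in S :\: T | dotv v y == 0%R] = S0 :\: T.
  by apply/setP => v; rewrite !inE andbA andbC.
rewrite !cardsD -TS0.
have hm : (#|S0 :&: T| <= #|S0|)%N by apply: subset_leq_card; apply: finset.subsetIl.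
have q1 := q_gt1.
rewrite mulnBr; nia.
Qed.

Lemma nonempty_step (s1 s2 : seq vec) : (size s1 + size s2 < n)%N ->
  (0 < #|perp (rowspan s1) :\: rowspan s2|)%N.
Proof.
move=> hs; rewrite lt0n; apply/negP => /eqP h0.
have sub : kerH s1 \subset rowspan s2.
  apply/fintype.subsetP => v vk; apply: contraT => vT.
  have : v \in perp (rowspan s1) :\: rowspan s2 by rewrite finset.in_setD vT kerH_sub_perp.
  have /eqP e0 : (perp (rowspan s1) :\: rowspan s2) == finset.set0 by rewrite -cards_eq0 h0.
  by rewrite e0 inE.
have h1 := kerH_card s1; have h2 := rowspan_card s2.
have h3 := subset_leq_card sub.
have : (q ^ n <= q ^ (size s2 + size s1))%N.
  apply: (leq_trans h1); rewrite expnD leq_mul2r; apply/orP; right.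
  exact: leq_trans h3 h2.
by rewrite leq_exp2l ?q_gt1 //; rewrite addnC leqNgt hs.
Qed.

End LinAlg.


Section Gen.
Variable F : finFieldType.
Variable n : nat.
Variable R : realType.
Local Notation vec := (vec F n).
Local Notation q := #|F|.
Implicit Types (A : {set vec}) (f g : vec -> R).

Lemma avg_ext A f g : (forall v, v \in A -> f v = g v) -> unif_avg A f = unif_avg A g.
Proof. by move=> h; rewrite /unif_avg (eq_bigr _ h). Qed.

Lemma avg_le A f g : (forall v, v \in A -> f v <= g v) -> unif_avg A f <= unif_avg A g.
Proof.
move=> h; rewrite /unif_avg ler_wpM2r ?invr_ge0 ?ler0n //.
exact: ler_sum.
Qed.

Lemma avg_le_const A f c : (forall v, v \in A -> f v <= c) -> 0 <= c -> unif_avg A f <= c.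
Proof.
move=> h c0; rewrite /unif_avg.
have [->|A0] := eqVneq #|A| 0%N; first by rewrite invr0 mulr0.
rewrite ler_pdivrMr ?ltr0n ?lt0n //.
apply: le_trans (ler_sum _ h) _.
by rewrite sumr_const mulr_natr.
Qed.

Lemma avg_const A (c : R) : (0 < #|A|)%N -> unif_avg A (fun _ => c) = c.
Proof.
move=> A0; rewrite /unif_avg sumr_const -[c *+ _]mulr_natr mulfK //.
by rewrite pnatr_eq0 -lt0n.
Qed.

Lemma avg_sub A f g : unif_avg A (fun v => f v - g v) = unif_avg A f - unif_avg A g.
Proof. by rewrite /unif_avg sumrB mulrBl. Qed.

Lemma avg_add A f g : unif_avg A (fun v => f v + g v) = unif_avg A f + unif_avg A g.
Proof. by rewrite /unif_avg big_split mulrDl. Qed.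

Lemma avg_sum A (Y : {set vec}) (h : vec -> vec -> R) :
  unif_avg A (fun v => \sum_(y in Y) h y v) = \sum_(y in Y) unif_avg A (h y).
Proof.
rewrite /unif_avg exchange_big mulr_suml; apply: eq_bigr => y _ //.
Qed.

Lemma avg_step (s1 s2 : seq vec) x y f c :
  x \in kerH s1 -> dotv x y != 0 -> 0 <= c ->
  (forall v, v \in perp (rowspan s1) :\: rowspan s2 ->
     f v <= c * (y \in kerH (rcons s2 v))%:R) ->
  unif_avg (perp (rowspan s1) :\: rowspan s2) f <= c * (y \in kerH s2)%:R / q%:R.
Proof.
move=> xk xy c0 hf.
set A := perp (rowspan s1) :\: rowspan s2.
case yk: (y \in kerH s2); last first.
  rewrite mulr0 mul0r; apply: avg_le_const => // v vA.
  by apply: le_trans (hf v vA) _; rewrite kerH_rcons yk /= mulr0.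
have hc := count_step xk xy yk.
set A0 := [set v in A | dotv v y == 0%R] in hc.
rewrite mulr1 /unif_avg.
have [A00|Apos] := eqVneq #|A| 0%N; first by rewrite A00 invr0 mulr0 divr_ge0 ?ler0n.
apply: (@le_trans _ _ ((\sum_(v in A) c * (v \in A0)%:R) / #|A|%:R)).
  rewrite ler_wpM2r ?invr_ge0 ?ler0n //; apply: ler_sum => v vA.
  apply: le_trans (hf v vA) _.
  by rewrite kerH_rcons yk /= /A0 finset.in_set vA.
have sA0 : A0 \subset A by apply/fintype.subsetP => w /setIdP [].
rewrite (big_setID A0) /= (finset.setIidPr sA0).
rewrite [X in _ + X]big1 ?addr0; last first.
  by move=> v; rewrite finset.in_setD => /andP [/negPf -> _]; rewrite mulr0.
rewrite (eq_bigr (fun _ => c)); last by move=> v ->; rewrite mulr1.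
rewrite sumr_const -[c *+ _]mulr_natr -mulrA ler_wpM2l //.
have qp : (0 < q)%N by apply: leq_trans (@q_gt1 F).
rewrite ler_pdivrMr ?ltr0n ?lt0n // mulrC ler_pdivlMr ?ltr0n //.
by rewrite -natrM ler_nat mulnC.
Qed.


Fixpoint genZ (k : nat) (sX sZ : seq vec) (g : seq vec -> seq vec -> R) : R :=
  match k with
  | 0 => g sX sZ
  | k'.+1 => unif_avg (perp (rowspan sX) :\: rowspan sZ)
               (fun v => genZ k' sX (rcons sZ v) g)
  end.

Fixpoint genX (l k : nat) (sX sZ : seq vec) (g : seq vec -> seq vec -> R) : R :=
  match k with
  | 0 => genZ l sX sZ g
  | k'.+1 => unif_avg (perp (rowspan sZ) :\: rowspan sX)
               (fun v => genX l k' (rcons sX v) sZ g)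
  end.

Lemma stepZ_gen k sX sZ P : stepZ R k sX sZ P = genZ k sX sZ (fun a b => (P a b)%:R).
Proof.
by elim: k sZ => [|k IH] sZ //=; apply: avg_ext => v _; rewrite IH.
Qed.

Lemma stepX_gen l k sX sZ P : stepX R l k sX sZ P = genX l k sX sZ (fun a b => (P a b)%:R).
Proof.
elim: k sX => [|k IH] sX /=; first exact: stepZ_gen.
by apply: avg_ext => v _; rewrite IH.
Qed.

Lemma genZ_le k sX sZ (g g' : seq vec -> seq vec -> R) :
  (forall e, g sX (sZ ++ e) <= g' sX (sZ ++ e)) -> genZ k sX sZ g <= genZ k sX sZ g'.
Proof.
elim: k sZ => [|k IH] sZ h /=; first by have := h [::]; rewrite cats0.
apply: avg_le => v _; apply: IH => e; rewrite cat_rcons; exact: h.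
Qed.

Lemma genZ_le_const k sX sZ (g : seq vec -> seq vec -> R) c :
  (forall b, g sX b <= c) -> 0 <= c -> genZ k sX sZ g <= c.
Proof.
move=> h c0; elim: k sZ => [|k IH] sZ //=.
by apply: avg_le_const => // v _; apply: IH.
Qed.

Lemma genZ_sub k sX sZ (g g' : seq vec -> seq vec -> R) :
  genZ k sX sZ (fun a b => g a b - g' a b) = genZ k sX sZ g - genZ k sX sZ g'.
Proof.
elim: k sZ => [|k IH] sZ //=.
by rewrite -avg_sub; apply: avg_ext => v _; rewrite IH.
Qed.

Lemma genZ_add k sX sZ (g g' : seq vec -> seq vec -> R) :
  genZ k sX sZ (fun a b => g a b + g' a b) = genZ k sX sZ g + genZ k sX sZ g'.
Proof.
elim: k sZ => [|k IH] sZ //=.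
by rewrite -avg_add; apply: avg_ext => v _; rewrite IH.
Qed.

Lemma genZ_sum k sX sZ (Y : {set vec}) (h : vec -> seq vec -> seq vec -> R) :
  genZ k sX sZ (fun a b => \sum_(y in Y) h y a b) = \sum_(y in Y) genZ k sX sZ (h y).
Proof.
elim: k sZ => [|k IH] sZ //=.
by rewrite -avg_sum; apply: avg_ext => v _; rewrite IH.
Qed.

Lemma genZ_one k sX sZ : (size sX + size sZ + k <= n)%N ->
  genZ k sX sZ (fun _ _ => 1) = 1.
Proof.
elim: k sZ => [|k IH] sZ //= hs.
rewrite (avg_ext (g := fun _ => 1)) ?avg_const //.
  by apply: nonempty_step; move: hs; lia.
by move=> v _; apply: IH; rewrite size_rcons; move: hs; lia.
Qed.

Lemma genZ_ker k sX sZ x y : x \in kerH sX -> dotv x y != 0 ->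
  genZ k sX sZ (fun a b => (y \in kerH b)%:R) <= (y \in kerH sZ)%:R * (q%:R^-1) ^+ k.
Proof.
move=> xk xy; elim: k sZ => [|k IH] sZ /=; first by rewrite expr0 mulr1.
rewrite exprS mulrCA mulrC (mulrC (y \in kerH _)%:R).
apply: avg_step xk xy _ _; first by rewrite exprn_ge0 // invr_ge0 ler0n.
by move=> v _; rewrite mulrC; apply: IH.
Qed.

Lemma genX_le l k sX sZ (g g' : seq vec -> seq vec -> R) :
  (forall e1 e2, g (sX ++ e1) (sZ ++ e2) <= g' (sX ++ e1) (sZ ++ e2)) ->
  genX l k sX sZ g <= genX l k sX sZ g'.
Proof.
elim: k sX => [|k IH] sX h /=.
  by apply: genZ_le => e; have := h [::] e; rewrite cats0.
apply: avg_le => v _; apply: IH => e1 e2; rewrite cat_rcons; exact: h.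
Qed.

Lemma genX_le_const l k sX sZ (g : seq vec -> seq vec -> R) c :
  (forall e, genZ l (sX ++ e) sZ g <= c) -> 0 <= c -> genX l k sX sZ g <= c.
Proof.
move=> h c0; elim: k sX h => [|k IH] sX h /=; first by have := h [::]; rewrite cats0.
apply: avg_le_const => // v _; apply: IH => e; rewrite cat_rcons; exact: h.
Qed.

Lemma genX_sub l k sX sZ (g g' : seq vec -> seq vec -> R) :
  genX l k sX sZ (fun a b => g a b - g' a b) = genX l k sX sZ g - genX l k sX sZ g'.
Proof.
elim: k sX => [|k IH] sX /=; first exact: genZ_sub.
by rewrite -avg_sub; apply: avg_ext => v _; rewrite IH.
Qed.

Lemma genX_add l k sX sZ (g g' : seq vec -> seq vec -> R) :
  genX l k sX sZ (fun a b => g a b + g' a b) = genX l k sX sZ g + genX l k sX sZ g'.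
Proof.
elim: k sX => [|k IH] sX /=; first exact: genZ_add.
by rewrite -avg_add; apply: avg_ext => v _; rewrite IH.
Qed.

Lemma genX_sum l k sX sZ (Y : {set vec}) (h : vec -> seq vec -> seq vec -> R) :
  genX l k sX sZ (fun a b => \sum_(y in Y) h y a b) = \sum_(y in Y) genX l k sX sZ (h y).
Proof.
elim: k sX => [|k IH] sX /=; first exact: genZ_sum.
by rewrite -avg_sum; apply: avg_ext => v _; rewrite IH.
Qed.

Lemma genX_one l k sX sZ : (size sX + size sZ + k + l <= n)%N ->
  genX l k sX sZ (fun _ _ => 1) = 1.
Proof.
elim: k sX => [|k IH] sX /= hs; first by apply: genZ_one; rewrite addn0 in hs.
rewrite (avg_ext (g := fun _ => 1)) ?avg_const //.
  by apply: nonempty_step; move: hs; lia.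
by move=> v _; apply: IH; rewrite size_rcons; move: hs; lia.
Qed.

Lemma genX_ker l k sX sZ x y : x \in kerH sZ -> dotv x y != 0 ->
  genX l k sX sZ (fun a b => (y \in kerH a)%:R) <= (y \in kerH sX)%:R * (q%:R^-1) ^+ k.
Proof.
move=> xk xy; elim: k sX => [|k IH] sX /=.
  by rewrite expr0 mulr1; apply: genZ_le_const => //; rewrite ler0n.
rewrite exprS mulrCA mulrC (mulrC (y \in kerH _)%:R).
apply: avg_step xk xy _ _; first by rewrite exprn_ge0 // invr_ge0 ler0n.
by move=> v _; rewrite mulrC; apply: IH.
Qed.

End Gen.


Section Vol.
Variable F : finFieldType.
Variable n : nat.
Variable R : realType.
Local Notation vec := (vec F n).

Lemma sum_prod (G : F -> R) :
  \sum_(y : vec) \prod_(i < n) G (y 0 i) = \prod_(i < n) \sum_a G a.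
Proof.
rewrite bigA_distr_bigA /=.
rewrite (reindex (fun y : vec => [ffun i => y 0 i])) /=.
  by apply: eq_bigr => y _; apply: eq_bigr => i _; rewrite ffunE.
exists (fun f : {ffun 'I_n -> F} => (\row_i f i : vec)) => y _.
  by apply/rowP => i; rewrite mxE ffunE.
by apply/ffunP => i; rewrite ffunE mxE.
Qed.

Lemma prod_wt (t : R) (y : vec) :
  \prod_(i < n) (if y 0 i == 0 then 1 else t) = t ^+ wt y.
Proof.
rewrite /wt -prodr_const [RHS]big_mkcond /=; apply: eq_bigr => i _; rewrite inE.
by case: (y 0 i == 0).
Qed.

Lemma vol_bound (p : R) : 0 < p -> p <= 1 - (#|F|%:R)^-1 ->
  #|[set y : vec | (wt y)%:R < p * n%:R]|%:R *
    expR (n%:R * ln (1 - p) + p * n%:R * ln (p / ((#|F|%:R - 1) * (1 - p)))) <= 1.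
Proof.
move=> p0 pQ.
set Q := (#|F|%:R : R).
have Q1 : 1 < Q by rewrite /Q ltr1n; exact: q_gt1.
have Qi0 : 0 < Q^-1 by rewrite invr_gt0; lra.
have p1 : p < 1 by lra.
have QQ : Q^-1 * Q = 1 by rewrite mulVf //; lra.
set t := p / ((Q - 1) * (1 - p)).
have d0 : 0 < (Q - 1) * (1 - p) by apply: mulr_gt0; lra.
have t0 : 0 < t by apply: divr_gt0.
have t1 : t <= 1.
  rewrite /t ler_pdivrMr // mul1r.
  have : 1 - p >= Q^-1 by lra.
  nra.
pose G := fun a : F => (1 - p) * (if a == 0 then 1 else t).
have sumG : \sum_a G a = 1.
  rewrite /G -mulr_sumr.
  have -> : \sum_(a : F) (if a == 0 then 1 else t) = \sum_(a : F) (t + (if a == 0 then 1 - t else 0)).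
    by apply: eq_bigr => a _; case: (a == 0); rewrite ?addr0 // addrC subrK.
  rewrite big_split /= sumr_const -big_mkcond big_pred1_eq -mulr_natr.
  rewrite -/Q.
  rewrite /t; field; lra.
set Y := [set y : vec | (wt y)%:R < p * n%:R].
set m := expR _.
have hY : forall y, y \in Y -> m <= \prod_(i < n) G (y 0 i).
  move=> y; rewrite inE => hw.
  rewrite /G big_split /= prod_wt prodr_const card_ord.
  have e1 : (1 - p) ^+ n = expR (n%:R * ln (1 - p)).
    by rewrite expRM_natl lnK // posrE; lra.
  have e2 : t ^+ wt y = expR ((wt y)%:R * ln t).
    by rewrite expRM_natl lnK // posrE.
  rewrite e1 e2 -expRD /m ler_expR lerD2l.
  have lt : ln t <= 0 by apply: ln_le0.
  nra.
have G0 : forall a, 0 <= G a.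
  by move=> a; rewrite /G; case: (a == 0); apply: mulr_ge0; lra.
apply: (@le_trans _ _ (\sum_(y in Y) \prod_(i < n) G (y 0 i))).
  rewrite mulr_natl -sumr_const; exact: ler_sum.
apply: (@le_trans _ _ (\sum_(y : vec) \prod_(i < n) G (y 0 i))).
  rewrite [X in _ <= X](bigID (mem Y)) /= lerDl; apply: sumr_ge0 => y _.
  by apply: prodr_ge0 => i _.
by rewrite sum_prod sumG prodr_const expr1n.
Qed.
End Vol.


Section Main.
Variable F : finFieldType.
Variable n : nat.
Variable R : realType.
Local Notation vec := (vec F n).

Lemma css_min (CX CZ : {set vec}) :
  css_dist CX CZ = n.+1 \/
  exists2 y, y \in (CZ :\: perp CX) :|: (CX :\: perp CZ) & (wt y <= css_dist CX CZ)%N.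
Proof.
rewrite /css_dist.
set D := (CZ :\: perp CX) :|: (CX :\: perp CZ).
pose P := fun m => (m = n.+1) \/ exists2 y, y \in D & (wt y <= m)%N.
apply: (big_ind P); first by left.
  by move=> x1 x2 h1 h2; case: (leqP x1 x2).
by move=> y yD; right; exists y.
Qed.

Lemma zero_perp (C : {set vec}) : (0 : vec) \in perp C.
Proof. by rewrite inE; apply/forall_inP => c _; rewrite dotv0l. Qed.

Lemma perp_anti (C1 C2 : {set vec}) y : C1 \subset C2 -> y \in perp C2 -> y \in perp C1.
Proof.
move=> /fintype.subsetP s; rewrite !inE => /forall_inP h; apply/forall_inP => c c1.
exact: h (s c c1).
Qed.

Lemma pointwise (Z0 : seq vec) (t : R) (a e : seq vec) :
  t <= n%:R ->
  (1 : R) - \sum_(y in [set y : vec | ((wt y)%:R < t) && (y != 0)])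
        (((y \in kerH (Z0 ++ e)) && (y \notin perp (kerH a)))%:R
         + ((y \in kerH a) && (y \notin perp (kerH Z0)))%:R)
  <= ((t <= (css_dist (kerH a) (kerH (Z0 ++ e)))%:R)%R)%:R.
Proof.
move=> tn.
set Y := [set y : vec | _].
set S := \sum_(y in Y) _.
have S0 : 0 <= S by apply: sumr_ge0 => y _; apply: addr_ge0; apply: ler0n.
case: (boolP (t <= _)) => ht; first by rewrite lerBlDr lerDl.
rewrite lerBlDr add0r.
move: ht; rewrite -ltNge => ht.
case: (css_min (kerH a) (kerH (Z0 ++ e))) => [e1|[y yD hy]].
  by move: ht; rewrite e1 => ht; exfalso; move: (lt_le_trans ht tn); rewrite ltr_nat ltnNge leqnSn.
have yY : y \in Y.
  rewrite inE; apply/andP; split.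
    by apply: le_lt_trans ht; rewrite ler_nat.
  apply/negP => /eqP y0; move: yD; rewrite y0 !finset.in_setU !finset.in_setD !zero_perp.
  by [].
rewrite /S (bigD1 y) //=.
apply: ler_wpDr; first by apply: sumr_ge0 => z _; apply: addr_ge0; apply: ler0n.
move: yD; rewrite finset.in_setU !finset.in_setD => /orP [/andP [h1 h2]|/andP [h1 h2]].
  by rewrite h1 h2 /= ler_wpDr.
have h3 : y \notin perp (kerH Z0).
  apply: contra h1; apply: perp_anti; apply/fintype.subsetP => v.
  by rewrite !inE all_cat => /andP [].
by rewrite h2 h3 /= ler_wpDl.
Qed.

Lemma bmul_le (b : bool) (c : R) : 0 <= c -> (b%:R : R) * c <= c.
Proof. by case: b => c0; rewrite ?mul1r ?mul0r. Qed.

Lemma size_HX0 r : size (HX0 F n r) = (n %/ r)%N.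
Proof. by rewrite size_map size_iota. Qed.
Lemma size_HZ0 r : size (HZ0 F n r) = (n %/ r)%N.
Proof. by rewrite size_map size_iota. Qed.

Lemma entropy_id (q : nat) (d : R) : (1 < q)%N -> 0 < d < 1 ->
  Hq q d * n%:R * ln (q%:R : R) =
  - (n%:R * ln (1 - d) + d * n%:R * ln (d / ((q%:R - 1) * (1 - d)))).
Proof.
move=> q1 /andP [d0 d1].
have Q1 : 1 < (q%:R : R) by rewrite ltr1n.
have lq : 0 < ln (q%:R : R) by apply: ln_gt0.
have pQ : (0 : R) < q%:R - 1 by lra.
have p1 : (0 : R) < 1 - d by lra.
rewrite ln_div ?posrE ?mulr_gt0 // lnM ?posrE //.
rewrite /Hq; field; lra.
Qed.

Lemma part1 (r l : nat) (delta eps : R) :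
  (r %| n)%N -> (l%:R : R) < n%:R / 2 - (n %/ r)%:R ->
  0 < delta -> delta <= 1 - (#|F|%:R)^-1 -> 0 < eps ->
  (Hq #|F| delta + eps) * n%:R <= l%:R ->
  1 - 2 * powR (#|F|%:R) (- (eps * n%:R)) < @qlrc_prob_dist_ge F n R r l (delta * n%:R).
Proof.
move=> hr hl d0 d1 e0 hH.
set q := #|F|.
set Q := (q%:R : R).
have q1 : (1 < q)%N := @q_gt1 F.
have Q1 : 1 < Q by rewrite ltr1n.
have Qi0 : 0 < Q^-1 by rewrite invr_gt0; lra.
have dlt1 : delta < 1 by lra.
have hsz : (n %/ r + n %/ r + l + l <= n)%N.
  have : ((2 * l + 2 * (n %/ r))%N%:R : R) < n%:R.
    rewrite natrD !natrM; lra.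
  rewrite ltr_nat; lia.
have npos : (0 : R) < n%:R.
  by have := ler0n R l; have := ler0n R (n %/ r); lra.
have tn : delta * n%:R <= n%:R.
  rewrite -[X in _ <= X]mul1r ler_wpM2r ?ler0n //; lra.
rewrite /qlrc_prob_dist_ge /qlrc_prob stepX_gen.
set X0 := HX0 F n r; set Z0 := HZ0 F n r.
set Y := [set y : vec | ((wt y)%:R < delta * n%:R) && (y != 0)].
pose B1 := fun (y : vec) (a b : seq vec) => (((y \in kerH b) && (y \notin perp (kerH a)))%:R : R).
pose B2 := fun (y : vec) (a b : seq vec) => (((y \in kerH a) && (y \notin perp (kerH Z0)))%:R : R).
set c := (Q^-1) ^+ l.
have c0 : 0 <= c by rewrite exprn_ge0 // ltW.
have hlow : genX l l X0 Z0 (fun a b => 1 - \sum_(y in Y) (B1 y a b + B2 y a b))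
   <= genX l l X0 Z0 (fun a b => ((delta * n%:R <= (css_dist (kerH a) (kerH b))%:R)%R)%:R).
  by apply: genX_le => e1 e2; apply: pointwise.
have hB1 : forall y, genX l l X0 Z0 (B1 y) <= c.
  move=> y; apply: genX_le_const => // e.
  set sX := X0 ++ e.
  case: (boolP (y \in perp (kerH sX))) => hy.
    by apply: genZ_le_const => // b; rewrite /B1 hy andbF.
  have [x xk xy] : exists2 x, x \in kerH sX & dotv x y != 0.
    move: hy; rewrite inE negb_forall_in => /exists_inP [x xk xy].
    by exists x => //; rewrite dotvC.
  apply: le_trans (@genZ_le _ _ _ l _ _ _ (fun a b => ((y \in kerH b)%:R : R)) _) _.
    by move=> e2; rewrite /B1 hy andbT.
  apply: le_trans (genZ_ker R l Z0 xk xy) _.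
  exact: bmul_le.
have hB2 : forall y, genX l l X0 Z0 (B2 y) <= c.
  move=> y.
  case: (boolP (y \in perp (kerH Z0))) => hy.
    apply: genX_le_const => // e; apply: genZ_le_const => // b.
    by rewrite /B2 hy andbF.
  have [x xk xy] : exists2 x, x \in kerH Z0 & dotv x y != 0.
    move: hy; rewrite inE negb_forall_in => /exists_inP [x xk xy].
    by exists x => //; rewrite dotvC.
  apply: le_trans (@genX_le _ _ _ l l _ _ _ (fun a b => ((y \in kerH a)%:R : R)) _) _.
    by move=> e1 e2; rewrite /B2 hy andbT.
  apply: le_trans (genX_ker R l l X0 xk xy) _.
  exact: bmul_le.
apply: lt_le_trans hlow.
rewrite genX_sub genX_one; last by rewrite size_HX0 size_HZ0.
rewrite genX_sum.
apply: (@lt_le_trans _ _ (1 - \sum_(y in Y) (c + c))); last first.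
  rewrite lerD2l lerN2; apply: ler_sum => y _; rewrite genX_add.
  exact: lerD.
rewrite sumr_const ltrD2l ltrN2.
set Y0 := [set y : vec | (wt y)%:R < delta * n%:R].
have hY : #|Y0| = (#|Y| + 1)%N.
  have eY : Y0 :\ 0 = Y by apply/setP => y; rewrite !inE andbC.
  rewrite (cardsD1 0 Y0) eY addnC; congr (_ + _)%N.
  rewrite inE.
  have -> : wt (0 : vec) = 0%N by rewrite /wt; apply/eqP; rewrite cards_eq0; apply/eqP; apply/setP => i; rewrite !inE mxE eqxx.
  have h0 : ((0%N)%:R : R) < delta * n%:R by rewrite mulr_gt0.
  by rewrite h0.
have hv := @vol_bound F n R _ d0 d1.
rewrite -/Y0 -/q -/Q in hv.
have lq : 0 < ln Q by apply: ln_gt0.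
have eH : n%:R * ln (1 - delta) + delta * n%:R * ln (delta / ((Q - 1) * (1 - delta)))
   = - (Hq q delta * n%:R * ln Q) by rewrite entropy_id ?opprK // d0 dlt1.
rewrite eH in hv.
set H := Hq q delta in hv hH *.
have hc : c = expR (- (l%:R * ln Q)).
  rewrite -mulrN expRM_natl -lnV ?posrE; last lra.
  by rewrite lnK // posrE invr_gt0; lra.
have hp : Q `^ (- (eps * n%:R)) = expR (- (eps * n%:R) * ln Q).
  by rewrite /powR ifF //; apply/negbTE; rewrite gt_eqF //; lra.
rewrite hp -mulr_natl.
have hYr : (#|Y0|%:R : R) = #|Y|%:R + 1 by rewrite hY natrD.
have e1 : (#|Y0|%:R : R) <= expR (H * n%:R * ln Q).
  by move: hv; rewrite expRN ler_pdivrMr ?expR_gt0 // mul1r.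
have e2 : expR (H * n%:R * ln Q) * c <= expR (- (eps * n%:R) * ln Q).
  rewrite hc -expRD ler_expR; nra.
have cp : 0 < c by rewrite hc expR_gt0.
have e3 : (#|Y0|%:R : R) * c <= expR (H * n%:R * ln Q) * c by rewrite ler_wpM2r // ltW.
rewrite hYr in e3.
nra.
Qed.

Lemma Hq_le (q : nat) (d e : R) : (1 < q)%N -> 0 < d -> d < 1 -> 0 < e ->
  powR 2 (2 / e) <= q%:R -> Hq q d <= d + e / 2.
Proof.
move=> q1 d0 d1 e0 hp.
set Q := (q%:R : R).
have Q1 : 1 < Q by rewrite ltr1n.
have lq : 0 < ln Q by apply: ln_gt0.
have l2 : 0 < ln (2 : R) by apply: ln_gt0; lra.
have hQ1 : ln (Q - 1) <= ln Q.
  by rewrite ler_ln ?posrE; lra.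
have h2 : 2 / e * ln (2 : R) <= ln Q.
  have pp : (0 : R) < powR 2 (2 / e) by apply: powR_gt0; lra.
  rewrite -ln_powR ler_ln ?posrE //; lra.
have h2' : ln (2 : R) <= e / 2 * ln Q.
  have -> : ln (2 : R) = e / 2 * (2 / e * ln 2) by field; lra.
  by rewrite ler_wpM2l //; apply: divr_ge0; lra.
have la : ln ((2 * d)^-1) = - (ln 2 + ln d).
  by rewrite lnV ?posrE ?mulr_gt0 // lnM ?posrE //; lra.
have lb : ln ((2 * (1 - d))^-1) = - (ln 2 + ln (1 - d)).
  by rewrite lnV ?posrE ?mulr_gt0 // ?lnM ?posrE //; lra.
have ha : - (ln 2 + ln d) <= (2 * d)^-1 - 1.
  have hx : -1 < (2 * d)^-1 - 1.
    have hi : 0 < (2 * d)^-1 by rewrite invr_gt0; lra.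
    lra.
  by have := le_ln1Dx hx; rewrite addrCA subrr addr0 la.
have hb : - (ln 2 + ln (1 - d)) <= (2 * (1 - d))^-1 - 1.
  have hx : -1 < (2 * (1 - d))^-1 - 1.
    have hi : 0 < (2 * (1 - d))^-1 by rewrite invr_gt0; lra.
    lra.
  by have := le_ln1Dx hx; rewrite addrCA subrr addr0 lb.
have ha' : d * (- (ln 2 + ln d)) <= 1 / 2 - d.
  apply: le_trans (ler_wpM2l (ltW d0) ha) _.
  by rewrite mulrBr mulr1 invfM mulrCA mulfV ?mulr1; lra.
have hb' : (1 - d) * (- (ln 2 + ln (1 - d))) <= 1 / 2 - (1 - d).
  have d1' : 0 <= 1 - d by lra.
  apply: le_trans (ler_wpM2l d1' hb) _.
  by rewrite mulrBr mulr1 invfM mulrCA mulfV ?mulr1; lra.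
have hd : d * ln (Q - 1) <= d * ln Q by rewrite ler_wpM2l // ltW.
rewrite /Hq -/Q ler_pdivrMr //.
nra.
Qed.

Lemma part2 (r l : nat) (delta eps : R) :
  (r %| n)%N -> (l%:R : R) < n%:R / 2 - (n %/ r)%:R ->
  0 < delta -> delta <= 1 - (#|F|%:R)^-1 -> 0 < eps ->
  powR 2 (2 / eps) <= #|F|%:R ->
  (delta + eps) * n%:R <= l%:R ->
  1 - 2 * powR (#|F|%:R) (- (eps * n%:R / 2)) < @qlrc_prob_dist_ge F n R r l (delta * n%:R).
Proof.
move=> hr hl d0 d1 e0 hp hl2.
have q1 : (1 < #|F|)%N := @q_gt1 F.
have Q1 : (1 : R) < #|F|%:R by rewrite ltr1n.
have Qi0 : (0 : R) < (#|F|%:R)^-1 by rewrite invr_gt0; lra.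
have e2 : 0 < eps / 2 by apply: divr_gt0 => //; lra.
have -> : eps * n%:R / 2 = eps / 2 * n%:R by rewrite mulrAC.
apply: part1 => //.
have hH := @Hq_le _ delta eps q1 d0 ltac:(lra) e0 hp.
apply: le_trans hl2.
by rewrite ler_wpM2r ?ler0n //; lra.
Qed.

End Main.

Unset Implicit Arguments.

Theorem proposition4p4 (R : realType) (F : finFieldType) (n r l : nat)
  (hr : (r %| n)%N)
  (hl : (l%:R : R) < n%:R / 2 - (n %/ r)%:R)
  (delta eps : R) (hdelta : 0 < delta) (hdelta1 : delta <= 1 - (#|F|%:R)^-1)
  (heps : 0 < eps) :
  ((Hq #|F| delta + eps) * n%:R <= l%:R ->
     1 - 2 * powR (#|F|%:R) (- (eps * n%:R))
       < @qlrc_prob_dist_ge F n R r l (delta * n%:R))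
  /\
  (powR 2 (2 / eps) <= #|F|%:R ->
   (delta + eps) * n%:R <= l%:R ->
     1 - 2 * powR (#|F|%:R) (- (eps * n%:R / 2))
       < @qlrc_prob_dist_ge F n R r l (delta * n%:R)).
Proof.
split; first exact: part1.
exact: part2.
Qed.
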